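(* Let $\mathcal{C}$ be an ordinary smooth projective curve of genus $g\ge1$ over $\mathbb{F}_q$. Then all of its Frobenius angles $\vartheta_1,\ldots,\vartheta_g$ are irrational.
   Context: Let $\mathcal{C}$ be a smooth projective curve of genus $g\ge1$ over the finite field $\mathbb{F}_q$ ($q$ a power of the prime $p$). The numerator of its zeta function is $P(T)=\prod_{j=1}^{2g}(1-\tau_j T)\in\mathbb{Z}[T]$, where the Frobenius eigenvalues $\tau_j$ satisfy $|\tau_j|=q^{1/2}$ and $\tau_{j+g}=\overline{\tau_j}$ for $j=1,\ldots,g$. Write $\tau_j = q^{1/2}e^{\pi i \vartheta_j}$ and $\tau_{j+g}=q^{1/2}e^{-\pi i\vartheta_j}$ with $\vartheta_j\in[0,1]$; these $\vartheta_j$ ($j=1,\ldots,g$) are the Frobenius angles. Fixing an embedding $\overline{\mathbb{Q}}\hookrightarrow\overline{\mathbb{Q}}_p$, the curve is ordinary if at least half of $\tau_1,\ldots,\tau_{2g}$ are $p$-adic units. *)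

(* Defs.v *)
From HB Require Import structures.
From mathcomp Require Import all_boot all_order all_algebra all_field.
Set Implicit Arguments. Unset Strict Implicit. Unset Printing Implicit Defensive.
Import Order.TTheory GRing.Theory Num.Theory.
Local Open Scope ring_scope.

(* The fixed embedding Qbar -> Qbar_p is encoded by the valuation ring it
   induces on Qbar = algC: O = { x | |x|_p <= 1 }.  Such a subring O is a
   valuation ring of algC (x in O or x^-1 in O for x <> 0) in which p is not
   a unit; conversely every such valuation ring comes from an embedding. *)
Definition padic_valring (p : nat) (O : pred algC) : Prop :=
  [/\ 1 \in O,
      {in O &, forall x y, x - y \in O},
      {in O &, forall x y, x * y \in O},
      (forall x : algC, x != 0 -> x \in O \/ x^-1 \in O)
    & (p%:R : algC)^-1 \notin O].

Definition padic_unit (O : pred algC) (x : algC) : Prop :=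
  [/\ x != 0, x \in O & x^-1 \in O].

(* Frobenius eigenvalues tau_1..tau_2g from tau_1..tau_g: tau_{j+g} = conj tau_j *)
Definition frob_eig (g : nat) (tau : 'I_g -> algC) (j : 'I_(g + g)) : algC :=
  match split j with
  | inl i => tau i
  | inr i => (tau i)^*
  end.

Definition zeta_num (g : nat) (tau : 'I_g -> algC) : {poly algC} :=
  \prod_(j < g + g) (1 - frob_eig tau j *: 'X).

(* Frobenius angle theta in [0,1] of tau = q^(1/2) e^(pi i theta) is rational
   iff theta = a/b (a,b nat, b > 0), i.e. iff (tau / q^(1/2))^b = e^(pi i a)
   = (-1)^a for some a, b with b > 0. *)
Definition frob_angle_rational (q : nat) (t : algC) : Prop :=
  exists a b : nat, (0 < b)%N /\ (t / sqrtC q%:R) ^+ b = (-1) ^+ a.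

Definition ordinary_frob (g : nat) (O : pred algC) (tau : 'I_g -> algC) : Prop :=
  exists S : {set 'I_(g + g)},
    (g <= #|S|)%N /\ (forall j, j \in S -> padic_unit O (frob_eig tau j)).

(* Main.v *)
Require Import Defs.
From HB Require Import structures.
From mathcomp Require Import all_boot all_order all_algebra all_field.
Import Order.TTheory GRing.Theory Num.Theory.
Local Open Scope ring_scope.

Section Aux.
Variables (p : nat) (O : pred algC).
Hypothesis hO : padic_valring p O.

Lemma O0 : 0 \in O.
Proof. case: hO => h1 hB _ _ _. by rewrite -(subrr 1) hB. Qed.

Lemma OD x y : x \in O -> y \in O -> x + y \in O.
Proof.
case: hO => h1 hB _ _ _ hx hy.
have hy' : - y \in O by rewrite -sub0r hB // O0.
by rewrite -(opprK y) hB.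
Qed.

Lemma OM x y : x \in O -> y \in O -> x * y \in O.
Proof. case: hO => h1 hB hM _ _ hx hy. exact: hM. Qed.

Lemma Onat n : n%:R \in O.
Proof.
case: hO => h1 _ _ _ _.
elim: n => [|n IH]; first by rewrite O0.
by rewrite -addn1 natrD OD.
Qed.

Lemma OX x n : x \in O -> x ^+ n \in O.
Proof.
case: hO => h1 _ _ _ _ hx.
elim: n => [|n IH]; first by rewrite expr0.
by rewrite exprS OM.
Qed.

Lemma pne0 : prime p -> (p%:R : algC) != 0.
Proof. by move=> pp; rewrite pnatr_eq0 -lt0n prime_gt0. Qed.

Lemma nonunit_pow n : prime p -> (0 < n)%N -> ((p%:R : algC) ^+ n)^-1 \notin O.
Proof.
move=> pp n0; apply/negP => hin.
case: hO => _ _ _ _ /negP; apply.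
have -> : (p%:R : algC)^-1 = p%:R ^+ n.-1 * (p%:R ^+ n)^-1.
  by rewrite -{2}(prednK n0) exprS invfM mulrCA mulfV ?mulr1 // expf_neq0 // pne0.
by rewrite OM // -natrX Onat.
Qed.

Lemma unit_pow_contra x m n : prime p -> (0 < n)%N ->
  padic_unit O x -> x ^+ m = (p%:R) ^+ n -> False.
Proof.
move=> pp n0 [_ _ hxi] e.
have := @nonunit_pow n pp n0; rewrite -e -exprVn.
by rewrite OX.
Qed.

Lemma unit_prod_contra x y n : prime p -> (0 < n)%N ->
  padic_unit O x -> padic_unit O y -> x * y = (p%:R) ^+ n -> False.
Proof.
move=> pp n0 [_ _ hx] [_ _ hy] e.
have := @nonunit_pow n pp n0; rewrite -e invfM.
by rewrite OM.
Qed.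
End Aux.

Theorem lemma8 (p k q g : nat) (tau : 'I_g -> algC) (O : pred algC) :
  prime p -> (0 < k)%N -> q = (p ^ k)%N -> (1 <= g)%N ->
  zeta_num tau \is a polyOver Num.int ->
  (forall j : 'I_g, `|tau j| = sqrtC q%:R) ->
  (forall j : 'I_g, 0 <= 'Im (tau j)) ->
  padic_valring p O ->
  ordinary_frob O tau ->
  forall j : 'I_g, ~ frob_angle_rational q (tau j).
Proof.
move=> pp k0 hq g1 _ habs _ hO [S [cardS hS]] j [a [b [b0 hrat]]].
have hprod : forall i, tau i * (tau i)^* = (p%:R) ^+ k.
  by move=> i; rewrite -normCK habs sqrtCK hq natrX.
have el : forall i, frob_eig tau (lshift g i) = tau i.
  by move=> i; rewrite /frob_eig (unsplitK (inl _ i)).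
have er : forall i, frob_eig tau (rshift g i) = (tau i)^*.
  by move=> i; rewrite /frob_eig (unsplitK (inr _ i)).
set s := sqrtC (q%:R : algC).
have s0 : s != 0.
  by rewrite /s sqrtC_eq0 hq pnatr_eq0 -lt0n expn_gt0 prime_gt0.
have hpow : tau j ^+ (2 * b) = (p%:R) ^+ (k * b).
  have h1 : (tau j / s) ^+ (2 * b) = 1.
    by rewrite mulnC exprM hrat sqrr_sign.
  move: h1; rewrite exprMn exprVn => /(canRL (mulfVK _)); rewrite mul1r.
  move=> ->; last by rewrite expf_neq0.
  by rewrite exprM sqrtCK hq natrX -exprM.
have hpowc : (tau j)^* ^+ (2 * b) = (p%:R) ^+ (k * b).
  by rewrite -rmorphXn hpow rmorphXn /= conjC_nat.
have kb0 : (0 < k * b)%N by rewrite muln_gt0 k0.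
have : (lshift g j \in S) || (rshift g j \in S).
  apply/negPn/negP => /norP [nl nr].
  pose f (x : 'I_(g + g)) : 'I_g := match split x with inl i => i | inr i => i end.
  have finj : {in S &, injective f}.
    move=> x y xS yS; rewrite /f.
    case ex: (split x) => [i|i]; case ey: (split y) => [i'|i'] e; subst i'.
    - by rewrite -(splitK x) -(splitK y) ex ey.
    - exfalso.
      have hx : x = lshift g i by rewrite -(splitK x) ex.
      have hy : y = rshift g i by rewrite -(splitK y) ey.
      apply: (@unit_prod_contra p O hO _ _ k pp k0 _ _ (hprod i)).
        by rewrite -el -hx; exact: hS.
      by rewrite -er -hy; exact: hS.
    - exfalso.
      have hx : x = rshift g i by rewrite -(splitK x) ex.
      have hy : y = lshift g i by rewrite -(splitK y) ey.
      apply: (@unit_prod_contra p O hO _ _ k pp k0 _ _ (hprod i)).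
        by rewrite -el -hy; exact: hS.
      by rewrite -er -hx; exact: hS.
    - by rewrite -(splitK x) -(splitK y) ex ey.
  have sub : f @: S \subset [set~ j].
    apply/subsetP => _ /imsetP [x xS ->]; rewrite !inE; apply/negP => /eqP fx.
    move: xS fx; rewrite -(splitK x) /f unsplitK.
    case: (split x) => i /= xS fx; subst i.
    - exact: (negP nl xS).
    - exact: (negP nr xS).
  have := subset_leq_card sub; rewrite card_in_imset // cardsC1 card_ord => h.
  have := leq_trans cardS h.
  by move: g1; case: (g) => // g0 _; rewrite ltnn.
case/orP => hin; have := hS _ hin; rewrite ?el ?er => hu.
- exact: (@unit_pow_contra p O hO _ _ _ pp kb0 hu hpow).
- exact: (@unit_pow_contra p O hO _ _ _ pp kb0 hu hpowc).
Qed.
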